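(* The type-independent absolute robustness $M_{\mathrm{abs}}$ is a type-independent LOSR monotone: for every nonsignaling resource $R$ (of arbitrary type and dimensions) and every LOSR-free transformation $\tau$ (possibly changing the type and dimensions of the resource), $M_{\mathrm{abs}}(\tau[R])\le M_{\mathrm{abs}}(R)$.
   Context: Systems have a dimension and a type in $\{\mathsf{I},\mathsf{C},\mathsf{Q}\}$ (trivial = dimension 1, classical, quantum). A bipartite resource with Alice's input/output $\mathcal{X},\mathcal{A}$ and Bob's input/output $\mathcal{Y},\mathcal{B}$ is a completely positive linear map from operators on $\mathcal{X}\otimes\mathcal{Y}$ to operators on $\mathcal{A}\otimes\mathcal{B}$, trace preserving on product inputs, nonsignaling in both directions, and with classicality constraints (classical output $\mathcal{A}$: $\langle i|R[\cdot]|j\rangle_{\mathcal{A}}=0$ for $i\neq j$; classical input $\mathcal{X}$: $R[|i\rangle\langle j|\otimes\psi]=0$ for $i\ne j$; similarly for Bob). It is LOSR-free if it equals $\sum_ip_iR^i_{\mathcal{A}|\mathcal{X}}\otimes R^i_{\mathcal{B}|\mathcal{Y}}$ with $(p_i)$ a probability distribution and single-party channels of the same types. $\mathbf{R}^{\mathrm{free}}$ denotes the set of LOSR-free resources of all types and dimensions. For a resource $R$, $M_{\mathrm{abs}}(R)=\min\{s\ge0:\ (R+sS)/(1+s)\in\mathbf{R}^{\mathrm{free}}\text{ for some LOSR-free }S\text{ with the same type and dimensions as }R\}$. An LOSR-free transformation is a map $\tau[R]=\sum_\lambda p_\lambda(\mathcal{E}^\lambda_{\mathcal{A}}\otimes\mathcal{E}^\lambda_{\mathcal{B}})\circ(R\otimes\mathrm{id}_{\mathcal{M}_A\mathcal{M}_B})\circ(\mathcal{P}^\lambda_{\mathcal{A}}\otimes\mathcal{P}^\lambda_{\mathcal{B}})$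 (a convex mixture of products of local supermaps: pre-processing channels $\mathcal{P}^\lambda_{\mathcal{A}}$ from a new input $\mathcal{X}'$ to $\mathcal{X}\otimes\mathcal{M}_A$ and post-processing channels $\mathcal{E}^\lambda_{\mathcal{A}}$ from $\mathcal{A}\otimes\mathcal{M}_A$ to a new output $\mathcal{A}'$, similarly for Bob), mapping resources of one type and dimension to resources of a (possibly different) type and dimension; it is linear and maps LOSR-free resources to LOSR-free resources. *)

(* Defs.v *)
From HB Require Import structures.
From mathcomp Require Import all_boot all_order all_algebra.
From mathcomp Require Import all_classical all_reals ereal.
From mathcomp.real_closed Require Import complex mxtens.


Unset Strict Implicit.
Unset Printing Implicit Defensive.

Import Order.TTheory GRing.Theory Num.Theory.
Local Open Scope ring_scope.
Local Open Scope complex_scope.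

Definition mx_idx {m n : nat} (i : 'I_m) (j : 'I_n) : 'I_(m * n) :=
  mxtens_index (i, j).

Definition is_linmap {R : realType} {m n : nat}
  (f : 'M[R[i]]_m -> 'M[R[i]]_n) : Prop :=
  forall (a : R[i]) (M N : 'M[R[i]]_m), f (a *: M + N) = a *: f M + f N.

Definition psd {R : realType} {n : nat} (A : 'M[R[i]]_n) : Prop :=
  forall v : 'cV[R[i]]_n,
    0 <= ((map_mx Num.conj v)^T *m A *m v) ord0 ord0.

Definition is_state {R : realType} {n : nat} (A : 'M[R[i]]_n) : Prop :=
  psd A /\ \tr A = 1.

(* tensor product f (x) g of linear maps, defined as the linear extension of
   E_{i1 j1} (x) E_{i2 j2} |-> f E_{i1 j1} (x) g E_{i2 j2} *)
Definition tmap {R : realType} {m1 n1 m2 n2 : nat}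
  (f : 'M[R[i]]_m1 -> 'M[R[i]]_n1) (g : 'M[R[i]]_m2 -> 'M[R[i]]_n2)
  : 'M[R[i]]_(m1 * m2) -> 'M[R[i]]_(n1 * n2) :=
  fun M => \sum_(i1 < m1) \sum_(j1 < m1) \sum_(i2 < m2) \sum_(j2 < m2)
      M (mx_idx i1 i2) (mx_idx j1 j2) *: (f (delta_mx i1 j1) *t g (delta_mx i2 j2)).

Definition idmapM {R : realType} (k : nat) : 'M[R[i]]_k -> 'M[R[i]]_k :=
  fun X => X.

Definition is_CP {R : realType} {m n : nat} (f : 'M[R[i]]_m -> 'M[R[i]]_n) : Prop :=
  forall (k : nat) (M : 'M[R[i]]_(k * m)), psd M -> psd (tmap (@idmapM R k) f M).

Definition ptraceB {R : realType} {a b : nat} (M : 'M[R[i]]_(a * b)) : 'M[R[i]]_a :=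
  \matrix_(i, j) \sum_(k < b) M (mx_idx i k) (mx_idx j k).
Definition ptraceA {R : realType} {a b : nat} (M : 'M[R[i]]_(a * b)) : 'M[R[i]]_b :=
  \matrix_(i, j) \sum_(k < a) M (mx_idx k i) (mx_idx k j).

Inductive systype := Ttriv | Tclass | Tquant.

Record system := Sys { stype : systype; sdim : nat }.

Definition valid_system (s : system) : Prop :=
  (0 < sdim s)%N /\ (stype s = Ttriv -> sdim s = 1%N).

Definition classical (s : system) : Prop := stype s = Tclass.

(* a bipartite scenario: Alice's input X / output A, Bob's input Y / output B *)
Record scenario := Scen { sX : system; sA : system; sY : system; sB : system }.

Definition valid_scenario (sc : scenario) : Prop :=
  [/\ valid_system (sX sc), valid_system (sA sc),
      valid_system (sY sc) & valid_system (sB sc)].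

Definition resmap (R : realType) (sc : scenario) : Type :=
  'M[R[i]]_(sdim (sX sc) * sdim (sY sc)) -> 'M[R[i]]_(sdim (sA sc) * sdim (sB sc)).

Definition class_out_left {R : realType} {p a b : nat}
  (f : 'M[R[i]]_p -> 'M[R[i]]_(a * b)) : Prop :=
  forall (M : 'M[R[i]]_p) (i j : 'I_a) (k l : 'I_b),
    i != j -> f M (mx_idx i k) (mx_idx j l) = 0.
Definition class_out_right {R : realType} {p a b : nat}
  (f : 'M[R[i]]_p -> 'M[R[i]]_(a * b)) : Prop :=
  forall (M : 'M[R[i]]_p) (i j : 'I_a) (k l : 'I_b),
    k != l -> f M (mx_idx i k) (mx_idx j l) = 0.
Definition class_in_left {R : realType} {x y q : nat}
  (f : 'M[R[i]]_(x * y) -> 'M[R[i]]_q) : Prop :=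
  forall (i j : 'I_x) (psi : 'M[R[i]]_y), i != j -> f (delta_mx i j *t psi) = 0.
Definition class_in_right {R : realType} {x y q : nat}
  (f : 'M[R[i]]_(x * y) -> 'M[R[i]]_q) : Prop :=
  forall (psi : 'M[R[i]]_x) (i j : 'I_y), i != j -> f (psi *t delta_mx i j) = 0.

Definition is_resource {R : realType} (sc : scenario) (Rm : resmap R sc) : Prop :=
  [/\ is_linmap Rm /\ is_CP Rm,
      (forall rh sg, \tr (Rm (rh *t sg)) = \tr (rh *t sg)),
      (forall rh sg sg2, is_state rh -> is_state sg -> is_state sg2 ->
         ptraceB (Rm (rh *t sg)) = ptraceB (Rm (rh *t sg2))),
      (forall rh rh2 sg, is_state rh -> is_state rh2 -> is_state sg ->
         ptraceA (Rm (rh *t sg)) = ptraceA (Rm (rh2 *t sg))) &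
      [/\ classical (sA sc) -> class_out_left Rm, classical (sB sc) -> class_out_right Rm,
          classical (sX sc) -> class_in_left Rm & classical (sY sc) -> class_in_right Rm]].

(* single-party channels (CPTP), with optional classical input / output *)
Definition is_channel {R : realType} {m n : nat} (cin cout : Prop)
  (f : 'M[R[i]]_m -> 'M[R[i]]_n) : Prop :=
  [/\ is_linmap f, is_CP f, (forall M, \tr (f M) = \tr M),
      (cin -> forall i j : 'I_m, i != j -> f (delta_mx i j) = 0) &
      (cout -> forall (M : 'M[R[i]]_m) (i j : 'I_n), i != j -> f M i j = 0)].

Definition is_losr_free {R : realType} (sc : scenario) (Rm : resmap R sc) : Prop :=
  exists (n : nat) (p : 'I_n -> R)
    (RA : 'I_n -> 'M[R[i]]_(sdim (sX sc)) -> 'M[R[i]]_(sdim (sA sc)))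
    (RB : 'I_n -> 'M[R[i]]_(sdim (sY sc)) -> 'M[R[i]]_(sdim (sB sc))),
    [/\ (forall l, 0 <= p l), \sum_(l < n) p l = 1,
        (forall l, is_channel (classical (sX sc)) (classical (sA sc)) (RA l)),
        (forall l, is_channel (classical (sY sc)) (classical (sB sc)) (RB l)) &
        (forall M, Rm M = \sum_(l < n) (p l)%:C *: tmap (RA l) (RB l) M)].

Definition mixmap {R : realType} (sc : scenario) (s : R) (Rm S : resmap R sc)
  : resmap R sc :=
  fun M => ((1 + s)^-1)%:C *: (Rm M + s%:C *: S M).

Definition robust_set {R : realType} (sc : scenario) (Rm : resmap R sc) : set R :=
  [set s | 0 <= s /\ exists S : resmap R sc,
             is_losr_free sc S /\ is_losr_free sc (mixmap sc s Rm S)].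

(* absolute robustness (infimum; +oo if no admissible s) *)
Definition Mabs {R : realType} (sc : scenario) (Rm : resmap R sc) : \bar R :=
  ereal_inf [set x%:E | x in robust_set sc Rm].

(* reordering (a (x) b) (x) (c (x) d) ~> (a (x) c) (x) (b (x) d) *)
Definition swap_idx {a b c d : nat} (u : 'I_((a * c) * (b * d))) : 'I_((a * b) * (c * d)) :=
  let ac := (mxtens_unindex u).1 in
  let bd := (mxtens_unindex u).2 in
  mx_idx (mx_idx (mxtens_unindex ac).1 (mxtens_unindex bd).1)
         (mx_idx (mxtens_unindex ac).2 (mxtens_unindex bd).2).

Definition swapmid {R : realType} {a b c d : nat} (M : 'M[R[i]]_((a * b) * (c * d)))
  : 'M[R[i]]_((a * c) * (b * d)) :=
  \matrix_(u, v) M (swap_idx u) (swap_idx v).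

(* (E_A (x) E_B) o (Rm (x) id_{M_A M_B}) o (P_A (x) P_B), with the tensor factors
   reordered appropriately *)
Definition wired {R : realType} {x' y' x y a b ma mb a' b' : nat}
  (PA : 'M[R[i]]_x' -> 'M[R[i]]_(x * ma)) (PB : 'M[R[i]]_y' -> 'M[R[i]]_(y * mb))
  (EA : 'M[R[i]]_(a * ma) -> 'M[R[i]]_a') (EB : 'M[R[i]]_(b * mb) -> 'M[R[i]]_b')
  (Rm : 'M[R[i]]_(x * y) -> 'M[R[i]]_(a * b))
  : 'M[R[i]]_(x' * y') -> 'M[R[i]]_(a' * b') :=
  fun M => tmap EA EB (swapmid (tmap Rm (@idmapM R (ma * mb)) (swapmid (tmap PA PB M)))).

Definition is_losr_transform {R : realType} (sc sc' : scenario)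
  (T : resmap R sc -> resmap R sc') : Prop :=
  exists (n : nat) (p : 'I_n -> R) (ma mb : 'I_n -> nat)
    (PA : forall l : 'I_n, 'M[R[i]]_(sdim (sX sc')) -> 'M[R[i]]_(sdim (sX sc) * ma l))
    (PB : forall l : 'I_n, 'M[R[i]]_(sdim (sY sc')) -> 'M[R[i]]_(sdim (sY sc) * mb l))
    (EA : forall l : 'I_n, 'M[R[i]]_(sdim (sA sc) * ma l) -> 'M[R[i]]_(sdim (sA sc')))
    (EB : forall l : 'I_n, 'M[R[i]]_(sdim (sB sc) * mb l) -> 'M[R[i]]_(sdim (sB sc'))),
    [/\ (forall l, 0 < ma l /\ 0 < mb l)%N,
        (forall l, 0 <= p l) /\ \sum_(l < n) p l = 1,
        (forall l, is_channel (classical (sX sc')) False (PA l))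
          /\ (forall l, is_channel (classical (sY sc')) False (PB l)),
        (forall l, is_channel False (classical (sA sc')) (EA l))
          /\ (forall l, is_channel False (classical (sB sc')) (EB l)) &
        (forall (Rm : resmap R sc) M,
           T Rm M = \sum_(l < n) (p l)%:C *: wired (PA l) (PB l) (EA l) (EB l) Rm M)].

(* Main.v *)
Require Import Defs.
From HB Require Import structures.
From mathcomp Require Import all_boot all_order all_algebra.
From mathcomp Require Import all_classical all_reals ereal.
From mathcomp.real_closed Require Import complex mxtens.
Import Order.TTheory GRing.Theory Num.Theory.
Local Open Scope ring_scope.
Local Open Scope complex_scope.

Section Aux.
Variable R : realType.
Local Notation C := (R[i]).

Lemma linD {m n} {f : 'M[C]_m -> 'M[C]_n} : is_linmap f -> forall M N, f (M + N) = f M + f N.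
Proof. by move=> h M N; have := h 1 M N; rewrite !scale1r. Qed.
Lemma lin0 {m n} {f : 'M[C]_m -> 'M[C]_n} : is_linmap f -> f 0 = 0.
Proof. move=> h; have := linD h 0 0; rewrite addr0 => e.
by apply: (@addrI _ (f 0)); rewrite addr0 -e. Qed.
Lemma linZ {m n} {f : 'M[C]_m -> 'M[C]_n} : is_linmap f -> forall a M, f (a *: M) = a *: f M.
Proof. move=> h a M; by rewrite -[a *: M]addr0 h lin0 // addr0. Qed.
Lemma lin_sum {m n} {f : 'M[C]_m -> 'M[C]_n} (I : Type) (r : seq I) (P : pred I) (F : I -> 'M_m) :
  is_linmap f -> f (\sum_(i <- r | P i) F i) = \sum_(i <- r | P i) f (F i).
Proof. move=> h; exact: (big_morph f (linD h) (lin0 h)). Qed.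
Lemma lin_decomp {m n} {f : 'M[C]_m -> 'M[C]_n} : is_linmap f -> forall M,
  f M = \sum_i \sum_j M i j *: f (delta_mx i j).
Proof. move=> h M; rewrite {1}(matrix_sum_delta M) lin_sum //; apply eq_bigr => i _.
rewrite lin_sum //; apply eq_bigr => j _; by rewrite linZ. Qed.
Lemma lin_ext {m n} {f g : 'M[C]_m -> 'M[C]_n} : is_linmap f -> is_linmap g ->
  (forall i j, f (delta_mx i j) = g (delta_mx i j)) -> forall M, f M = g M.
Proof. move=> hf hg e M; rewrite (lin_decomp hf) (lin_decomp hg).
by apply eq_bigr => i _; apply eq_bigr => j _; rewrite e. Qed.

Lemma lin_id k : is_linmap (@idmapM R k).
Proof. by []. Qed.
Lemma lin_comp {m n p} {f : 'M[C]_n -> 'M[C]_p} {g : 'M[C]_m -> 'M[C]_n} :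
  is_linmap f -> is_linmap g -> is_linmap (fun M => f (g M)).
Proof. by move=> hf hg a M N; rewrite hg hf. Qed.

Lemma tensmxDl {m n p q} (A B : 'M[C]_(m,n)) (Q : 'M[C]_(p,q)) : (A + B) *t Q = A *t Q + B *t Q.
Proof. by apply/matrixP => u v; rewrite !mxE mulrDl. Qed.
Lemma tensmxDr {m n p q} (Q : 'M[C]_(m,n)) (A B : 'M[C]_(p,q)) : Q *t (A + B) = Q *t A + Q *t B.
Proof. by apply/matrixP => u v; rewrite !mxE mulrDr. Qed.
Lemma tensmxZl {m n p q} a (A : 'M[C]_(m,n)) (Q : 'M[C]_(p,q)) : (a *: A) *t Q = a *: (A *t Q).
Proof. by apply/matrixP => u v; rewrite !mxE mulrA. Qed.
Lemma tensmxZr {m n p q} a (Q : 'M[C]_(m,n)) (A : 'M[C]_(p,q)) : Q *t (a *: A) = a *: (Q *t A).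
Proof. by apply/matrixP => u v; rewrite !mxE mulrCA. Qed.
Lemma tensmx_suml {m n p q} (I : Type) (r : seq I) (P : pred I) (F : I -> 'M[C]_(m,n)) (Q : 'M[C]_(p,q)) :
  (\sum_(i <- r | P i) F i) *t Q = \sum_(i <- r | P i) (F i *t Q).
Proof. exact: (big_morph (fun A => A *t Q) (fun A B => tensmxDl A B Q) (tens0mx _)). Qed.
Lemma tensmx_sumr {m n p q} (I : Type) (r : seq I) (P : pred I) (F : I -> 'M[C]_(p,q)) (Q : 'M[C]_(m,n)) :
  Q *t (\sum_(i <- r | P i) F i) = \sum_(i <- r | P i) (Q *t F i).
Proof. exact: (big_morph (fun A => Q *t A) (fun A B => tensmxDr Q A B) (tensmx0 _)). Qed.

Lemma mx_idx_eq {m n} (a c : 'I_m) (b d : 'I_n) :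
  (mx_idx a b == mx_idx c d) = (a == c) && (b == d).
Proof.
apply/eqP/andP => [e|[/eqP -> /eqP ->] //].
have := congr1 (@mxtens_unindex m n) e; rewrite /mx_idx !mxtens_indexK; case=> -> ->; by split.
Qed.

Lemma mx_tensP {m n p q} (A B : 'M[C]_(m * n, p * q)) :
  (forall i j k l, A (mx_idx i j) (mx_idx k l) = B (mx_idx i j) (mx_idx k l)) -> A = B.
Proof.
move=> e; apply/matrixP => u v; case: (mxtens_indexP u) => i j; case: (mxtens_indexP v) => k l.
exact: e.
Qed.

Lemma tensE {m n p q} (A : 'M[C]_(m,n)) (B : 'M[C]_(p,q)) i j k l :
  (A *t B) (mx_idx i j) (mx_idx k l) = A i k * B j l.
Proof. exact: tensmxE. Qed.

Lemma delta_tens {m n} (i1 j1 : 'I_m) (i2 j2 : 'I_n) :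
  delta_mx (mx_idx i1 i2) (mx_idx j1 j2) = (delta_mx i1 j1 : 'M[C]_m) *t delta_mx i2 j2.
Proof.
apply: mx_tensP => i j k l; rewrite tensE !mxE !mx_idx_eq.
by case: (i == i1); case: (j == i2); case: (k == j1); case: (l == j2); rewrite /= ?mulr1 ?mulr0 ?mul0r.
Qed.

Lemma lin_ext2 {m1 m2 n} {f g : 'M[C]_(m1 * m2) -> 'M[C]_n} : is_linmap f -> is_linmap g ->
  (forall i1 j1 i2 j2, f (delta_mx i1 j1 *t delta_mx i2 j2) = g (delta_mx i1 j1 *t delta_mx i2 j2)) ->
  forall M, f M = g M.
Proof.
move=> hf hg e; apply: lin_ext => // u v.
case: (mxtens_indexP u) => i1 i2; case: (mxtens_indexP v) => j1 j2.
have := delta_tens i1 j1 i2 j2; rewrite /mx_idx => ->; exact: e.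
Qed.

Lemma lin_tmap {m1 n1 m2 n2} (f : 'M[C]_m1 -> 'M[C]_n1) (g : 'M[C]_m2 -> 'M[C]_n2) :
  is_linmap (tmap f g).
Proof.
move=> a M N; rewrite /tmap scaler_sumr -big_split; apply eq_bigr => i1 _.
rewrite scaler_sumr -big_split; apply eq_bigr => j1 _.
rewrite scaler_sumr -big_split; apply eq_bigr => i2 _.
rewrite scaler_sumr -big_split; apply eq_bigr => j2 _.
by rewrite !mxE scalerA scalerDl.
Qed.

Lemma tmap_tens {m1 n1 m2 n2} (f : 'M[C]_m1 -> 'M[C]_n1) (g : 'M[C]_m2 -> 'M[C]_n2) A B :
  is_linmap f -> is_linmap g -> tmap f g (A *t B) = f A *t g B.
Proof.
move=> hf hg; rewrite (lin_decomp hf A) (lin_decomp hg B) /tmap.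
symmetry; rewrite tensmx_suml; apply eq_bigr => i1 _; rewrite tensmx_suml; apply eq_bigr => j1 _.
rewrite tensmxZl tensmx_sumr scaler_sumr; apply eq_bigr => i2 _.
rewrite tensmx_sumr scaler_sumr; apply eq_bigr => j2 _.
by rewrite tensmxZr scalerA tensE.
Qed.


Lemma quadE {n} (A : 'M[C]_n) (v : 'cV[C]_n) :
  ((map_mx Num.conj v)^T *m A *m v) ord0 ord0
  = \sum_i Num.conj (v i ord0) * \sum_j A i j * v j ord0.
Proof.
rewrite mxE; under eq_bigr => j _ do rewrite mxE mulr_suml /=.
rewrite exchange_big; apply eq_bigr => i _; rewrite mulr_sumr; apply eq_bigr => j _.
by rewrite !mxE mulrA.
Qed.

Definition rx {n n'} (h : 'I_n' -> 'I_n) (M : 'M[C]_n) : 'M[C]_n' := \matrix_(u, v) M (h u) (h v).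

Lemma lin_rx {n n'} (h : 'I_n' -> 'I_n) : is_linmap (rx h).
Proof. by move=> a M N; apply/matrixP => u v; rewrite !mxE. Qed.

Lemma collapse {n n'} (h : 'I_n' -> 'I_n) (G : 'I_n -> C) (x : 'I_n' -> C) :
  \sum_a (\sum_u (h u == a)%:R * x u) * G a = \sum_u x u * G (h u).
Proof.
under eq_bigr => a _ do rewrite mulr_suml /=.
rewrite exchange_big; apply eq_bigr => u _.
rewrite (bigD1 (h u)) //= eqxx mul1r big1 ?addr0 // => a /negbTE.
by rewrite eq_sym => ->; rewrite !mul0r.
Qed.

Lemma psd_rx {n n'} (h : 'I_n' -> 'I_n) (M : 'M[C]_n) : psd M -> psd (rx h M).
Proof.
move=> hM v; set w : 'cV[C]_n := \col_a \sum_u (h u == a)%:R * v u ord0.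
have := hM w; congr (_ <= _); rewrite !quadE.
have cw : forall a, Num.conj (w a ord0) = \sum_u (h u == a)%:R * Num.conj (v u ord0).
  move=> a; rewrite mxE rmorph_sum; apply eq_bigr => u _; by rewrite rmorphM /= conjC_nat.
under eq_bigr => a _ do rewrite cw.
rewrite collapse; apply eq_bigr => u _; congr (_ * _).
under eq_bigr => b _ do rewrite mxE mulrC.
rewrite collapse; apply eq_bigr => u' _; by rewrite mxE mulrC.
Qed.

Lemma CP_comp {m n p} (f : 'M[C]_n -> 'M[C]_p) (g : 'M[C]_m -> 'M[C]_n) :
  is_linmap f -> is_linmap g -> is_CP f -> is_CP g -> is_CP (fun M => f (g M)).
Proof.
move=> lf lg cf cg k M hM.
have e : forall M, tmap (@idmapM R k) (fun M => f (g M)) M = tmap (@idmapM R k) f (tmap (@idmapM R k) g M).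
  apply: lin_ext2; [exact: lin_tmap | exact: (lin_comp (lin_tmap _ _) (lin_tmap _ _)) | ].
  move=> i1 j1 i2 j2.
  by rewrite !tmap_tens //; exact: lin_comp.
by rewrite e; apply: cf; apply: cg.
Qed.

Definition perm3 {k a b} (u : 'I_(k * (a * b))) : 'I_((k * b) * a) :=
  let p := mxtens_unindex u in let q := mxtens_unindex p.2 in
  mxtens_index (mxtens_index (p.1, q.2), q.1).
Definition perm3' {k a b} (u : 'I_((k * b) * a)) : 'I_(k * (a * b)) :=
  let p := mxtens_unindex u in let q := mxtens_unindex p.1 in
  mxtens_index (q.1, mxtens_index (p.2, q.2)).

Lemma rx_perm3 {k a b} (A : 'M[C]_k) (B : 'M[C]_b) (D : 'M[C]_a) :
  rx (@perm3 k a b) ((A *t B) *t D) = A *t (D *t B).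
Proof.
apply/matrixP => u v; case: (mxtens_indexP u) => i ab; case: (mxtens_indexP ab) => x y.
case: (mxtens_indexP v) => j cd; case: (mxtens_indexP cd) => z w.
by rewrite mxE /perm3 !mxtens_indexK !tensmxE mulrAC mulrA.
Qed.

Lemma rx_perm3' {k a b} (A : 'M[C]_k) (B : 'M[C]_b) (D : 'M[C]_a) :
  rx (@perm3' k a b) (A *t (D *t B)) = (A *t B) *t D.
Proof.
apply/matrixP => u v; case: (mxtens_indexP u) => ib x; case: (mxtens_indexP ib) => i y.
case: (mxtens_indexP v) => jd z; case: (mxtens_indexP jd) => j w.
by rewrite mxE /perm3' !mxtens_indexK !tensmxE mulrAC mulrA.
Qed.

Lemma CP_tens_id {x a} (S : 'M[C]_x -> 'M[C]_a) (ma : nat) :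
  is_linmap S -> is_CP S -> is_CP (tmap S (@idmapM R ma)).
Proof.
move=> lS cS k M hM.
have e : forall M, tmap (@idmapM R k) (tmap S (@idmapM R ma)) M
       = rx (@perm3 k a ma) (tmap (@idmapM R (k * ma)) S (rx (@perm3' k x ma) M)).
  apply: lin_ext2; [exact: lin_tmap | exact: (lin_comp (lin_rx _) (lin_comp (lin_tmap _ _) (lin_rx _))) | ].
  move=> i j u v; case: (mxtens_indexP u) => a1 b1; case: (mxtens_indexP v) => c1 d1.
  have -> := delta_tens a1 c1 b1 d1.
  rewrite tmap_tens //; last exact: lin_tmap.
  rewrite tmap_tens // rx_perm3' tmap_tens // rx_perm3 /idmapM //.
by rewrite e; apply: psd_rx; apply: cS; apply: psd_rx.
Qed.

Lemma tr_tens {m n} (A : 'M[C]_m) (B : 'M[C]_n) : \tr (A *t B) = \tr A * \tr B.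
Proof. by rewrite /mxtrace mulr_sum; apply eq_bigr => u _; rewrite mxE. Qed.

Lemma tr_sum {n} (I : Type) (r : seq I) (P : pred I) (F : I -> 'M[C]_n) :
  \tr (\sum_(i <- r | P i) F i) = \sum_(i <- r | P i) \tr (F i).
Proof. exact: (big_morph _ (@mxtraceD _ _) (mxtrace0 _ _)). Qed.

Lemma TP_tens_id {x a} (S : 'M[C]_x -> 'M[C]_a) (ma : nat) :
  is_linmap S -> (forall M, \tr (S M) = \tr M) ->
  forall Y, \tr (tmap S (@idmapM R ma) Y) = \tr Y.
Proof.
move=> lS tS Y; rewrite (lin_decomp (lin_tmap _ _) Y) {2}(matrix_sum_delta Y) !tr_sum.
apply eq_bigr => u _; rewrite !tr_sum; apply eq_bigr => v _; rewrite !mxtraceZ; congr (_ * _).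
case: (mxtens_indexP u) => a1 b1; case: (mxtens_indexP v) => c1 d1.
have -> := delta_tens a1 c1 b1 d1.
by rewrite tmap_tens // !tr_tens tS.
Qed.


Local Hint Resolve lin_id lin_tmap : core.

Lemma chan_comp {x' x ma a a'} (cin cout cS1 cS2 : Prop) (P : 'M[C]_x' -> 'M[C]_(x * ma))
  (S : 'M[C]_x -> 'M[C]_a) (E : 'M[C]_(a * ma) -> 'M[C]_a') :
  is_channel cin False P -> is_channel cS1 cS2 S -> is_channel False cout E ->
  is_channel cin cout (fun X => E (tmap S (@idmapM R ma) (P X))).
Proof.
case=> lP cP tP inP _; case=> lS cS tS _ _; case=> lE cE tE _ outE; split.
- exact: (lin_comp lE (lin_comp (lin_tmap _ _) lP)).
- apply: CP_comp => //; first exact: (lin_comp (lin_tmap _ _) lP).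
  by apply: CP_comp => //; apply: CP_tens_id.
- by move=> M; rewrite tE TP_tens_id // tP.
- by move=> hc i j ne; rewrite inP // (lin0 (lin_tmap _ _)) (lin0 lE).
- by move=> hc M i j ne; apply: outE.
Qed.

Lemma lin_swapmid {a b c d} : is_linmap (@swapmid R a b c d).
Proof. by move=> k M N; apply/matrixP => u v; rewrite !mxE. Qed.

Lemma swapmid_tens {a b c d} (A1 : 'M[C]_a) (A2 : 'M[C]_b) (B1 : 'M[C]_c) (B2 : 'M[C]_d) :
  swapmid ((A1 *t A2) *t (B1 *t B2)) = (A1 *t B1) *t (A2 *t B2).
Proof.
apply/matrixP => u v; case: (mxtens_indexP u) => ac bd; case: (mxtens_indexP ac) => i1 i3.
case: (mxtens_indexP bd) => i2 i4.
case: (mxtens_indexP v) => ac' bd'; case: (mxtens_indexP ac') => j1 j3.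
case: (mxtens_indexP bd') => j2 j4.
rewrite mxE /swap_idx /mx_idx !mxtens_indexK !tensmxE.
by rewrite !mulrA; congr (_ * _); rewrite mulrAC.
Qed.

Lemma lin_tensl {m p} (W : 'M[C]_p) : is_linmap (fun P : 'M[C]_m => P *t W).
Proof. by move=> c U V; rewrite tensmxDl tensmxZl. Qed.

Lemma lin_tensr {m p} (W : 'M[C]_m) : is_linmap (fun P : 'M[C]_p => W *t P).
Proof. by move=> c U V; rewrite tensmxDr tensmxZr. Qed.

Lemma wired_tens {x' y' x y a b ma mb a' b'}
  (PA : 'M[C]_x' -> 'M[C]_(x * ma)) (PB : 'M[C]_y' -> 'M[C]_(y * mb))
  (EA : 'M[C]_(a * ma) -> 'M[C]_a') (EB : 'M[C]_(b * mb) -> 'M[C]_b')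
  (SA : 'M[C]_x -> 'M[C]_a) (SB : 'M[C]_y -> 'M[C]_b) :
  is_linmap PA -> is_linmap PB -> is_linmap EA -> is_linmap EB -> is_linmap SA -> is_linmap SB ->
  forall M, wired PA PB EA EB (tmap SA SB) M
   = tmap (fun X => EA (tmap SA (@idmapM R ma) (PA X))) (fun Y => EB (tmap SB (@idmapM R mb) (PB Y))) M.
Proof.
move=> lPA lPB lEA lEB lSA lSB.
have claim : forall P Q, tmap EA EB (swapmid (tmap (tmap SA SB) (@idmapM R (ma * mb)) (swapmid (P *t Q))))
    = EA (tmap SA (@idmapM R ma) P) *t EB (tmap SB (@idmapM R mb) Q).
  move=> P Q; move: P; apply: lin_ext2.
  - exact: (lin_comp (lin_tmap _ _) (lin_comp lin_swapmid (lin_comp (lin_tmap _ _)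
           (lin_comp lin_swapmid (lin_tensl _))))).
  - by move=> c U V; rewrite (lin_tmap _ _ c) lEA tensmxDl tensmxZl.
  move=> a1 c1 b1 d1; move: Q; apply: lin_ext2.
  - exact: (lin_comp (lin_tmap _ _) (lin_comp lin_swapmid (lin_comp (lin_tmap _ _)
           (lin_comp lin_swapmid (lin_tensr _))))).
  - by move=> c U V; rewrite (lin_tmap _ _ c) lEB tensmxDr tensmxZr.
  move=> a2 c2 b2 d2.
  rewrite swapmid_tens tmap_tens // tmap_tens // swapmid_tens tmap_tens //.
  by rewrite tmap_tens // tmap_tens.
apply: lin_ext2.
- exact: (lin_comp (lin_tmap _ _) (lin_comp lin_swapmid (lin_comp (lin_tmap _ _)
           (lin_comp lin_swapmid (lin_tmap _ _))))).
- exact: lin_tmap.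
move=> i1 j1 i2 j2; rewrite /wired (tmap_tens _ _ _ _ lPA lPB).
rewrite (tmap_tens _ _ _ _ (lin_comp lEA (lin_comp (lin_tmap _ _) lPA)) (lin_comp lEB (lin_comp (lin_tmap _ _) lPB))).
exact: claim.
Qed.

Lemma tmap_fun_lin {m1 n1 m2 n2} (F1 F2 : 'M[C]_m1 -> 'M[C]_n1) (g : 'M[C]_m2 -> 'M[C]_n2) c X :
  tmap (fun N => c *: F1 N + F2 N) g X = c *: tmap F1 g X + tmap F2 g X.
Proof.
rewrite /tmap scaler_sumr -big_split; apply eq_bigr => i1 _.
rewrite scaler_sumr -big_split; apply eq_bigr => j1 _.
rewrite scaler_sumr -big_split; apply eq_bigr => i2 _.
rewrite scaler_sumr -big_split; apply eq_bigr => j2 _.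
by rewrite tensmxDl tensmxZl scalerDr !scalerA mulrC.
Qed.

Lemma tmap_fun0 {m1 n1 m2 n2} (g : 'M[C]_m2 -> 'M[C]_n2) X :
  tmap (fun _ : 'M[C]_m1 => (0 : 'M[C]_n1)) g X = 0.
Proof.
rewrite /tmap big1 // => i1 _; rewrite big1 // => j1 _; rewrite big1 // => i2 _.
by rewrite big1 // => j2 _; rewrite tens0mx scaler0.
Qed.

Section W.
Variables (x' y' x y a b ma mb a' b' : nat)
  (PA : 'M[C]_x' -> 'M[C]_(x * ma)) (PB : 'M[C]_y' -> 'M[C]_(y * mb))
  (EA : 'M[C]_(a * ma) -> 'M[C]_a') (EB : 'M[C]_(b * mb) -> 'M[C]_b')
  (lEA : is_linmap EA) (lEB : is_linmap EB) (M : 'M[C]_(x' * y')).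

Lemma wired_lin (F1 F2 : 'M[C]_(x * y) -> 'M[C]_(a * b)) c :
  wired PA PB EA EB (fun N => c *: F1 N + F2 N) M
  = c *: wired PA PB EA EB F1 M + wired PA PB EA EB F2 M.
Proof. by rewrite /wired tmap_fun_lin (lin_swapmid c) lin_tmap. Qed.

Lemma wired_zero : wired PA PB EA EB (fun _ => 0) M = 0.
Proof. by rewrite /wired tmap_fun0 (lin0 lin_swapmid) (lin0 (lin_tmap _ _)). Qed.

Lemma wired_sum n (c : 'I_n -> C) (F : 'I_n -> 'M[C]_(x * y) -> 'M[C]_(a * b)) :
  wired PA PB EA EB (fun N => \sum_(k < n) c k *: F k N) M
  = \sum_(k < n) c k *: wired PA PB EA EB (F k) M.
Proof.
elim: n c F => [|n IH] c F.
  rewrite big_ord0 -wired_zero; congr wired; apply: funext => N; by rewrite big_ord0.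
rewrite big_ord_recr /= addrC -IH -wired_lin; congr wired; apply: funext => N.
by rewrite big_ord_recr /= addrC.
Qed.

Lemma wired_mix (F1 F2 : 'M[C]_(x * y) -> 'M[C]_(a * b)) c d :
  wired PA PB EA EB (fun N => c *: (F1 N + d *: F2 N)) M
  = c *: (wired PA PB EA EB F1 M + d *: wired PA PB EA EB F2 M).
Proof.
rewrite (_ : (fun N => c *: (F1 N + d *: F2 N)) = (fun N => c *: F1 N + ((c * d) *: F2 N + 0))).
  by rewrite wired_lin wired_lin wired_zero addr0 scalerDr scalerA.
by apply: funext => N; rewrite addr0 scalerDr scalerA.
Qed.

End W.

Lemma pair_sum (V : zmodType) n m (G : 'I_n -> 'I_m -> V) :
  \sum_(l < n) \sum_(k < m) G l k = \sum_(u < n * m) G (mxtens_unindex u).1 (mxtens_unindex u).2.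
Proof.
rewrite pair_big; apply: reindex => //=.
by exists (@mxtens_index n m) => i; rewrite (mxtens_indexK, mxtens_unindexK).
Qed.

Lemma rcM (u v : R) : (u * v)%:C = u%:C * v%:C.
Proof. exact: rmorphM. Qed.

Lemma losr_T sc sc' (T : resmap R sc -> resmap R sc') (F : resmap R sc) :
  is_losr_transform sc sc' T -> is_losr_free sc F -> is_losr_free sc' (T F).
Proof.
case=> n [p [ma [mb [PA [PB [EA [EB [hm [hp1 hp2] [hPA hPB] [hEA hEB] hT]]]]]]]].
case=> m [q [FA [FB [hq1 hq2 hFA hFB hF]]]].
have eF : F = (fun N => \sum_(k < m) (q k)%:C *: tmap (FA k) (FB k) N) := funext hF.
pose CA := fun u : 'I_(n * m) => fun X => EA (mxtens_unindex u).1
   (tmap (FA (mxtens_unindex u).2) (@idmapM R (ma (mxtens_unindex u).1)) (PA (mxtens_unindex u).1 X)).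
pose CB := fun u : 'I_(n * m) => fun X => EB (mxtens_unindex u).1
   (tmap (FB (mxtens_unindex u).2) (@idmapM R (mb (mxtens_unindex u).1)) (PB (mxtens_unindex u).1 X)).
exists (n * m)%N, (fun u => p (mxtens_unindex u).1 * q (mxtens_unindex u).2), CA, CB; split.
- by move=> u; apply: mulr_ge0.
- by rewrite -(@mulr_sum R n m p q) hp2 hq2 mulr1.
- by move=> u; apply: chan_comp; [exact: hPA | exact: hFA | exact: hEA].
- by move=> u; apply: chan_comp; [exact: hPB | exact: hFB | exact: hEB].
move=> M; rewrite hT.
have step : forall l, wired (PA l) (PB l) (EA l) (EB l) F M
   = \sum_(k < m) (q k)%:C *: tmap
       (fun X => EA l (tmap (FA k) (@idmapM R (ma l)) (PA l X)))
       (fun Y => EB l (tmap (FB k) (@idmapM R (mb l)) (PB l Y))) M.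
  move=> l; rewrite eF wired_sum.
  apply: eq_bigr => k _; rewrite wired_tens //.
  + by case: (hPA l).
  + by case: (hPB l).
  + by case: (hEA l).
  + by case: (hEB l).
  + by case: (hFA k).
  + by case: (hFB k).
under eq_bigr => l _ do rewrite step scaler_sumr.
rewrite pair_sum; apply: eq_bigr => u _.
by rewrite scalerA rcM.
Qed.

Lemma T_mix sc sc' (T : resmap R sc -> resmap R sc') s (Rm S : resmap R sc) :
  is_losr_transform sc sc' T ->
  forall M, mixmap sc' s (T Rm) (T S) M = T (mixmap sc s Rm S) M.
Proof.
case=> n [p [ma [mb [PA [PB [EA [EB [hm [hp1 hp2] [hPA hPB] [hEA hEB] hT]]]]]]]].
move=> M; rewrite /mixmap !hT.
under [RHS]eq_bigr => l _ do rewrite wired_mix.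
rewrite scalerDr !scaler_sumr -big_split; apply: eq_bigr => l _ /=.
rewrite !scalerDr !scalerA; congr (_ *: _ + _ *: _); first exact: mulrC.
by rewrite mulrAC (mulrC ((1 + s)^-1)%:C).
Qed.

End Aux.

Theorem mainTheorem4 (R : realType) (sc sc' : scenario)
  (T : resmap R sc -> resmap R sc') (Rm : resmap R sc) :
  valid_scenario sc -> valid_scenario sc' ->
  is_resource sc Rm -> is_losr_transform sc sc' T ->
  (Mabs sc' (T Rm) <= Mabs sc Rm)%E.
Proof.
move=> _ _ _ hT; rewrite /Mabs; apply: ereal_inf_le_tmp.
move=> _ [s [s0 [S [hS hmix]]] <-]; exists s => //; split => //.
exists (T S); split; first exact: losr_T.
have -> : mixmap sc' s (T Rm) (T S) = T (mixmap sc s Rm S).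
  by apply: funext => M; apply: T_mix.
exact: losr_T.
Qed.
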